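(* For Lebesgue-almost all $(\xi,\eta)\in\mathbb{R}^2$ one has $\lambda_{\min}(\xi,\eta)=\tfrac12$.
   Context: For real numbers $\xi,\eta$: $\lambda(\xi,\eta)$ (resp. $\widehat{\lambda}(\xi,\eta)$) is the supremum of the real $\lambda>0$ such that the system $1\le |x_0|\le X$, $\max(|x_0\xi-x_1|,|x_0\eta-x_2|)\le X^{-\lambda}$ has a solution $(x_0,x_1,x_2)\in\mathbb{Z}^3\setminus\{0\}$ for arbitrarily large $X$ (resp. for every sufficiently large $X$). For $0\le\mu<\lambda(\xi,\eta)$, $\widehat{\lambda}_\mu(\xi,\eta)$ is the supremum of the real $\lambda>0$ such that the system $1\le|x_0|\le X$, $\max(|x_0\xi-x_1|,|x_0\eta-x_2|)\le\min(X^{-\lambda},|x_0|^{-\mu})$ has a solution $(x_0,x_1,x_2)\in\mathbb{Z}^3\setminus\{0\}$ for every sufficiently large $X$ (the supremum of the empty set being $0$). The map $\mu\mapsto\widehat{\lambda}_\mu(\xi,\eta)$ is non-increasing, and $\lambda_{\min}(\xi,\eta):=\inf_{0<\mu<\lambda(\xi,\eta)}\widehat{\lambda}_\mu(\xi,\eta)=\lim_{\mu\to\lambda(\xi,\eta)^-}\widehat{\lambda}_\mu(\xi,\eta)$. *)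

(* Defs.v *)
From Stdlib Require Import Reals Lra ZArith Classical ClassicalEpsilon.
Open Scope R_scope.

Inductive Rbar : Type := Finite (r : R) | p_infty.

Definition Rbar_le (x y : Rbar) : Prop :=
  match x, y with
  | _, p_infty => True
  | p_infty, Finite _ => False
  | Finite a, Finite b => a <= b
  end.

Definition Rbar_lt (x y : Rbar) : Prop :=
  match x, y with
  | Finite _, p_infty => True
  | p_infty, _ => False
  | Finite a, Finite b => a < b
  end.

(** Supremum of a set of reals, with the convention sup(empty) = 0: we take
    the sup of [S ∪ {0}] (all sets used below consist of positive reals). *)
Definition with0 (S : R -> Prop) : R -> Prop := fun x => x = 0 \/ S x.

Lemma with0_ne (S : R -> Prop) : exists x, with0 S x.
Proof. exists 0; left; reflexivity. Qed.

Definition Rbar_sup0 (S : R -> Prop) : Rbar :=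
  match excluded_middle_informative (bound (with0 S)) with
  | left H => Finite (proj1_sig (completeness (with0 S) H (with0_ne S)))
  | right _ => p_infty
  end.

Definition Rbar_is_glb (P : Rbar -> Prop) (v : Rbar) : Prop :=
  (forall w, P w -> Rbar_le v w) /\
  (forall u, (forall w, P w -> Rbar_le u w) -> Rbar_le u v).

Definition dist_approx (xi eta : R) (x0 x1 x2 : Z) : R :=
  Rmax (Rabs (IZR x0 * xi - IZR x1)) (Rabs (IZR x0 * eta - IZR x2)).

Definition sys (xi eta X l : R) (x0 x1 x2 : Z) : Prop :=
  1 <= Rabs (IZR x0) <= X /\ dist_approx xi eta x0 x1 x2 <= Rpower X (- l).

Definition sys_mu (xi eta mu X l : R) (x0 x1 x2 : Z) : Prop :=
  1 <= Rabs (IZR x0) <= X /\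
  dist_approx xi eta x0 x1 x2 <= Rmin (Rpower X (- l)) (Rpower (Rabs (IZR x0)) (- mu)).

Definition lambda_set (xi eta : R) : R -> Prop := fun l =>
  0 < l /\ forall X0 : R, exists X, X0 <= X /\ exists x0 x1 x2 : Z, sys xi eta X l x0 x1 x2.

Definition lambda (xi eta : R) : Rbar := Rbar_sup0 (lambda_set xi eta).

Definition hat_lambda_mu_set (xi eta mu : R) : R -> Prop := fun l =>
  0 < l /\ exists X0 : R, forall X, X0 <= X -> exists x0 x1 x2 : Z, sys_mu xi eta mu X l x0 x1 x2.

Definition hat_lambda_mu (xi eta mu : R) : Rbar := Rbar_sup0 (hat_lambda_mu_set xi eta mu).

Definition lambda_min_is (xi eta : R) (v : Rbar) : Prop :=
  Rbar_is_glb (fun w => exists mu, 0 < mu /\ Rbar_lt (Finite mu) (lambda xi eta)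
                                   /\ w = hat_lambda_mu xi eta mu) v.

(** Lebesgue null subsets of R^2: coverable by countably many closed
    rectangles of arbitrarily small total area. *)
Definition null2 (N : R -> R -> Prop) : Prop :=
  forall eps, 0 < eps ->
  exists a b c d : nat -> R,
    (forall n, a n <= b n /\ c n <= d n) /\
    (forall x y, N x y -> exists n, a n <= x <= b n /\ c n <= y <= d n) /\
    (forall n, sum_f_R0 (fun k => (b k - a k) * (d k - c k)) n <= eps).

(* Main.v *)
Require Import Defs.
From Stdlib Require Import Reals ZArith Lra Lia List Classical ClassicalEpsilon.
Open Scope R_scope.

Lemma sup0_eq (S : R -> Prop) (c : R) : 0 < c ->
  (forall l, S l -> l <= c) -> (forall l, 0 < l < c -> S l) -> Rbar_sup0 S = Finite c.
Proof.
  intros Hc Hub Hin. unfold Rbar_sup0.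
  destruct (excluded_middle_informative (bound (with0 S))) as [Hb|Hb].
  - destruct (completeness (with0 S) Hb (with0_ne S)) as [s [Hs1 Hs2]]; simpl.
    f_equal. apply Rle_antisym.
    + apply Hs2. intros x [->|Hx]; [lra| now apply Hub].
    + destruct (Rle_or_lt c s) as [H|H]; [exact H|].
      assert (H0 : 0 <= s) by (apply Hs1; left; reflexivity).
      assert (Hl : S ((s + c) / 2)) by (apply Hin; lra).
      assert (H1 := Hs1 _ (or_intror Hl)). lra.
  - exfalso. apply Hb. exists c. intros x [->|Hx]; [lra| now apply Hub].
Qed.

Lemma Rpower_pos x y : 0 < Rpower x y.
Proof. unfold Rpower; apply exp_pos. Qed.

Lemma Rpower_neg_le_base x y l : 0 < x <= y -> 0 <= l -> Rpower y (- l) <= Rpower x (- l).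
Proof.
  intros Hxy Hl. rewrite !Rpower_Ropp. apply Rinv_le_contravar; [apply Rpower_pos|].
  apply Rle_Rpower_l; lra.
Qed.

Definition lseq (n : nat) : R := 1/2 + / (2 * INR (n + 2)).

Lemma lseq_gt n : 1/2 < lseq n.
Proof.
  unfold lseq. assert (0 < INR (n+2)) by (apply lt_0_INR; lia).
  assert (0 < / (2 * INR (n+2))) by (apply Rinv_0_lt_compat; lra). lra.
Qed.

Lemma lambda_mono xi eta l l' : 0 < l' <= l -> lambda_set xi eta l -> lambda_set xi eta l'.
Proof.
  intros Hl [Hp H]. split; [lra|]. intros X0. destruct (H X0) as [X [HX [x0 [x1 [x2 [Hs Hd]]]]]].
  exists X; split; [exact HX|]. exists x0, x1, x2. split; [exact Hs|].
  eapply Rle_trans; [exact Hd|]. apply Rle_Rpower; lra.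
Qed.

Lemma hat_in_lambda xi eta mu l : hat_lambda_mu_set xi eta mu l -> lambda_set xi eta l.
Proof.
  intros [Hp [X0 H]]. split; [exact Hp|]. intros X1.
  destruct (H (Rmax X0 X1) (Rmax_l _ _)) as [x0 [x1 [x2 [Hs Hd]]]].
  exists (Rmax X0 X1). split; [apply Rmax_r|]. exists x0, x1, x2. split; [exact Hs|].
  eapply Rle_trans; [exact Hd| apply Rmin_l].
Qed.



Lemma pigeon : forall m (f : nat -> nat), (forall k, (k <= m)%nat -> (f k < m)%nat) ->
  exists i j, (i < j <= m)%nat /\ f i = f j.
Proof.
  induction m as [|m IH]; intros f Hf.
  - specialize (Hf 0%nat (le_n 0)). lia.
  - destruct (classic (exists k, (k <= m)%nat /\ f k = f (S m))) as [[k [Hk Heq]]|Hno].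
    + exists k, (S m). split; [lia|exact Heq].
    + set (g := fun k => if Nat.eq_dec (f k) m then f (S m) else f k).
      assert (Hg : forall k, (k <= m)%nat -> (g k < m)%nat).
      { intros k Hk. unfold g. destruct (Nat.eq_dec (f k) m) as [E|E].
        - assert (f (S m) <> m) by (intro E'; apply Hno; exists k; split; [exact Hk|lia]).
          specialize (Hf (S m) (le_n _)). lia.
        - specialize (Hf k ltac:(lia)). lia. }
      destruct (IH g Hg) as [i [j [Hij Hgij]]]. unfold g in Hgij.
      destruct (Nat.eq_dec (f i) m) as [Ei|Ei]; destruct (Nat.eq_dec (f j) m) as [Ej|Ej].
      * exists i, j. split; [lia|lia].
      * exfalso. apply Hno. exists j. split; [lia|auto].
      * exfalso. apply Hno. exists i. split; [lia|auto].
      * exists i, j. split; [lia|exact Hgij].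
Qed.

Definition fl (x : R) : Z := (up x - 1)%Z.
Lemma fl_spec x : IZR (fl x) <= x < IZR (fl x) + 1.
Proof. unfold fl. rewrite minus_IZR. destruct (archimed x). simpl. lra. Qed.

Lemma dirichlet_Q xi eta (Q : nat) : (1 <= Q)%nat ->
  exists x0 x1 x2 : Z, (1 <= x0 <= Z.of_nat (Q * Q))%Z /\
    dist_approx xi eta x0 x1 x2 <= / INR Q.
Proof.
  intros HQ. set (q := INR Q).
  assert (Hq : 1 <= q) by (unfold q; apply (le_INR 1); exact HQ).
  set (u := fun (z : R) (k : nat) => INR k * z - IZR (fl (INR k * z))).
  assert (Hu : forall z k, 0 <= u z k < 1).
  { intros z k. unfold u. destruct (fl_spec (INR k * z)). lra. }
  set (a := fun z k => fl (q * u z k)).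
  assert (Ha : forall z k, (0 <= a z k < Z.of_nat Q)%Z /\ IZR (a z k) <= q * u z k < IZR (a z k) + 1).
  { intros z k. unfold a. destruct (fl_spec (q * u z k)) as [H1 H2]. destruct (Hu z k).
    split; [|lra]. split.
    - assert (0 <= q * u z k) by (apply Rmult_le_pos; lra).
      assert (Hm : (-1 < fl (q * u z k))%Z) by (apply lt_IZR; simpl; lra). lia.
    - apply lt_IZR. rewrite <- INR_IZR_INZ. fold q.
      assert (q * u z k < q) by (rewrite <- (Rmult_1_r q) at 2; apply Rmult_lt_compat_l; lra). lra. }
  set (code := fun k => Z.to_nat (a xi k * Z.of_nat Q + a eta k)).
  assert (Hc : forall k, (k <= Q * Q)%nat -> (code k < Q * Q)%nat).
  { intros k _. unfold code. destruct (Ha xi k) as [[A1 A2] _]. destruct (Ha eta k) as [[B1 B2] _].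
    apply Nat2Z.inj_lt. rewrite Z2Nat.id by nia. rewrite Nat2Z.inj_mul. nia. }
  destruct (pigeon _ code Hc) as [i [j [Hij Hcode]]].
  assert (Heq : a xi i = a xi j /\ a eta i = a eta j).
  { unfold code in Hcode. destruct (Ha xi i) as [[A1 A2] _]. destruct (Ha eta i) as [[B1 B2] _].
    destruct (Ha xi j) as [[A3 A4] _]. destruct (Ha eta j) as [[B3 B4] _].
    apply Z2Nat.inj in Hcode; [|nia|nia].
    revert Hcode A1 A2 B1 B2 A3 A4 B3 B4.
    generalize (a xi i) (a xi j) (a eta i) (a eta j) (Z.of_nat Q).
    intros p1 p2 p3 p4 qq Hcc A1 A2 B1 B2 A3 A4 B3 B4.
    assert (E : ((p1 - p2) * qq = p4 - p3)%Z) by lia.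
    assert (p1 - p2 = 0)%Z by nia. lia. }
  exists (Z.of_nat j - Z.of_nat i)%Z, (fl (INR j * xi) - fl (INR i * xi))%Z,
         (fl (INR j * eta) - fl (INR i * eta))%Z.
  split; [split; lia|].
  assert (Hclose : forall z, a z i = a z j ->
     Rabs (IZR (Z.of_nat j - Z.of_nat i) * z - IZR (fl (INR j * z) - fl (INR i * z))) <= / q).
  { intros z Ez. rewrite !minus_IZR, <- !INR_IZR_INZ.
    replace ((INR j - INR i) * z - (IZR (fl (INR j * z)) - IZR (fl (INR i * z))))
      with (u z j - u z i) by (unfold u; ring).
    destruct (Ha z i) as [_ [C1 C2]]. destruct (Ha z j) as [_ [C3 C4]]. rewrite Ez in C1, C2.
    assert (Hd : Rabs (q * (u z j - u z i)) < 1) by (apply Rabs_def1; lra).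
    rewrite Rabs_mult, Rabs_pos_eq in Hd by lra.
    apply Rlt_le. apply (Rmult_lt_reg_l q); [lra|]. rewrite Rinv_r by lra. exact Hd. }
  unfold dist_approx. apply Rmax_lub; apply Hclose; tauto.
Qed.

Lemma sqrt_floor X : 1 <= X -> exists Q : nat, (1 <= Q)%nat /\ INR Q ^ 2 <= X < (INR Q + 1) ^ 2.
Proof.
  intros HX.
  assert (aux : forall N, X < (INR N + 1) ^ 2 -> exists Q, INR Q ^ 2 <= X < (INR Q + 1) ^ 2).
  { induction N as [|N IH]; intros H.
    - exists 0%nat. simpl in *. lra.
    - destruct (Rle_or_lt (INR (S N) ^ 2) X) as [H1|H1].
      + exists (S N). split; assumption.
      + apply IH. rewrite S_INR in H1. exact H1. }
  destruct (archimed X) as [H1 _].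
  assert (Hu : (0 <= up X)%Z) by (apply le_IZR; lra).
  destruct (aux (Z.to_nat (up X))) as [Q HQ].
  { rewrite INR_IZR_INZ, Z2Nat.id by exact Hu. nra. }
  exists Q. split; [|exact HQ]. destruct Q; [simpl in HQ; lra| lia].
Qed.

Lemma dirichlet_hat xi eta mu l : 0 < mu <= 1/2 -> 0 < l < 1/2 -> hat_lambda_mu_set xi eta mu l.
Proof.
  intros Hmu Hl. split; [lra|].
  set (c := Rpower 4 (/ (1 - 2 * l))).
  exists (Rmax 4 c). intros X HX.
  assert (HX4 : 4 <= X) by (eapply Rle_trans; [apply Rmax_l|exact HX]).
  assert (HXc : c <= X) by (eapply Rle_trans; [apply Rmax_r|exact HX]).
  destruct (sqrt_floor X ltac:(lra)) as [Q [HQ [HQ1 HQ2]]].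
  set (q := INR Q) in *.
  assert (Hq : 1 <= q) by (unfold q; apply (le_INR 1); exact HQ).
  destruct (dirichlet_Q xi eta Q HQ) as [x0 [x1 [x2 [Hx0 Hd]]]].
  fold q in Hd.
  assert (Hx0R : 1 <= IZR x0 <= q ^ 2).
  { split; [apply (IZR_le 1); lia|]. replace (q ^ 2) with (IZR (Z.of_nat (Q * Q))).
    - apply IZR_le; lia.
    - rewrite <- INR_IZR_INZ, mult_INR. unfold q. ring. }
  exists x0, x1, x2. unfold sys_mu. rewrite Rabs_pos_eq by lra.
  split; [lra|]. apply Rmin_glb; eapply Rle_trans; try exact Hd.
  -
    rewrite Rpower_Ropp. apply Rinv_le_contravar; [apply Rpower_pos|].
    assert (Hc4 : Rpower c (1 - 2 * l) = 4).
    { unfold c. rewrite Rpower_mult, Rinv_l by lra. apply Rpower_1. lra. }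
    assert (HXp : 4 <= Rpower X (1 - 2 * l)).
    { rewrite <- Hc4. apply Rle_Rpower_l; [lra|]. split; [apply Rpower_pos|exact HXc]. }
    assert (Hsplit : Rpower X l * Rpower X l * Rpower X (1 - 2 * l) = X).
    { rewrite <- !Rpower_plus. replace (l + l + (1 - 2 * l)) with 1 by ring. apply Rpower_1. lra. }
    assert (Hy := Rpower_pos X l). set (y := Rpower X l) in *.
    assert (y * y <= X / 4) by nra.
    assert (X < 4 * (q * q)) by nra.
    nra.
  - rewrite Rpower_Ropp. apply Rinv_le_contravar; [apply Rpower_pos|].
    apply Rle_trans with (Rpower (q ^ 2) mu).
    + apply Rle_Rpower_l; lra.
    + replace (q ^ 2) with (Rpower q (INR 2)) by (apply Rpower_pow; lra).
      rewrite Rpower_mult. rewrite <- (Rpower_1 q) at 2 by lra.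
      apply Rle_Rpower; [lra|]. simpl. lra.
Qed.

Record rect := mkR { ra : R; rb : R; rc : R; rd : R }.
Definition area (r : rect) := (rb r - ra r) * (rd r - rc r).
Definition valid (r : rect) := ra r <= rb r /\ rc r <= rd r.
Definition inR (r : rect) x y := ra r <= x <= rb r /\ rc r <= y <= rd r.
Definition r0 := mkR 0 0 0 0.
Fixpoint listarea (L : list rect) : R :=
  match L with nil => 0 | r :: L => area r + listarea L end.

Lemma listarea_app l1 l2 : listarea (l1 ++ l2) = listarea l1 + listarea l2.
Proof. induction l1; simpl; [ring| rewrite IHl1; ring]. Qed.

Lemma area_nonneg r : valid r -> 0 <= area r.
Proof. intros [H1 H2]. unfold area. apply Rmult_le_pos; lra. Qed.

Lemma sum_zero M : sum_f_R0 (fun _ => 0) M = 0.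
Proof. induction M; simpl; [reflexivity| rewrite IHM; ring]. Qed.

Lemma sum_nth_le L M : (forall r, In r L -> valid r) ->
  sum_f_R0 (fun k => area (nth k L r0)) M <= listarea L.
Proof.
  revert M. induction L as [|r L IH]; intros M HV.
  - simpl. rewrite (sum_eq _ (fun _ => 0)).
    + rewrite sum_zero. lra.
    + intros i _. destruct i; unfold area; simpl; ring.
  - simpl. destruct M as [|M].
    + simpl. assert (0 <= listarea L); [|lra].
      clear IH. induction L; simpl; [lra|].
      assert (0 <= area a) by (apply area_nonneg; apply HV; simpl; auto).
      assert (0 <= listarea L); [apply IHL; intros r' Hr'; apply HV; simpl in *; tauto|lra].
    + rewrite decomp_sum by lia. simpl.
      assert (sum_f_R0 (fun i => area (nth i L r0)) M <= listarea L)
        by (apply IH; intros r' Hr'; apply HV; simpl; auto). lra.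
Qed.

Section Flat.
Variable F : nat -> list rect.
Definition F' i := F i ++ (r0 :: nil).
Fixpoint Lp (M : nat) : list rect :=
  match M with O => F' 0 | S M => Lp M ++ F' (S M) end.

Lemma Lp_len M : (M < length (Lp M))%nat.
Proof.
  induction M; simpl; unfold F'; rewrite ?length_app; simpl; lia.
Qed.

Lemma Lp_prefix k K : (k <= K)%nat -> exists t, Lp K = Lp k ++ t.
Proof.
  induction 1 as [|K H IH].
  - exists nil. now rewrite app_nil_r.
  - destruct IH as [t Ht]. exists (t ++ F' (S K)). simpl. rewrite Ht, app_assoc. reflexivity.
Qed.

Lemma nth_stable p K : (p <= K)%nat -> nth p (Lp p) r0 = nth p (Lp K) r0.
Proof.
  intros H. destruct (Lp_prefix p K H) as [t Ht]. rewrite Ht, app_nth1; [reflexivity|].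
  apply Lp_len.
Qed.

Lemma listarea_Lp M : listarea (Lp M) = sum_f_R0 (fun i => listarea (F i)) M.
Proof.
  assert (HF : forall i, listarea (F' i) = listarea (F i)).
  { intros i. unfold F'. rewrite listarea_app. simpl. unfold area; simpl. ring. }
  induction M; simpl; [apply HF|]. rewrite listarea_app, IHM, HF. reflexivity.
Qed.

Lemma In_Lp i r : In r (F i) -> In r (Lp i).
Proof.
  intros H. assert (H' : In r (F' i)) by (unfold F'; apply in_or_app; auto).
  destruct i; simpl; [exact H'|]. apply in_or_app; auto.
Qed.

Lemma valid_Lp M r : (forall i r, In r (F i) -> valid r) -> In r (Lp M) -> valid r.
Proof.
  intros HV. induction M; simpl; intros H.
  - unfold F' in H. apply in_app_or in H. destruct H as [H|[<-|[]]]; [eapply HV; eauto|].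
    unfold valid; simpl; lra.
  - apply in_app_or in H. destruct H as [H|H]; [auto|].
    unfold F' in H. apply in_app_or in H. destruct H as [H|[<-|[]]]; [eapply HV; eauto|].
    unfold valid; simpl; lra.
Qed.
End Flat.

Lemma null_from_lists (N : R -> R -> Prop) :
  (forall eps, 0 < eps -> exists F : nat -> list rect,
     (forall i r, In r (F i) -> valid r) /\
     (forall x y, N x y -> exists i r, In r (F i) /\ inR r x y) /\
     (forall M, sum_f_R0 (fun i => listarea (F i)) M <= eps)) -> null2 N.
Proof.
  intros H eps Heps. destruct (H eps Heps) as [F [HV [HC HS]]].
  set (s := fun k => nth k (Lp F k) r0).
  assert (Hvs : forall k, valid (s k)).
  { intros k. unfold s. destruct (lt_dec k (length (Lp F k))) as [Hl|Hl].
    - apply (valid_Lp F k); [exact HV| apply nth_In; exact Hl].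
    - rewrite nth_overflow by lia. unfold valid; simpl; lra. }
  exists (fun k => ra (s k)), (fun k => rb (s k)), (fun k => rc (s k)), (fun k => rd (s k)).
  split; [exact Hvs|]. split.
  - intros x y Hxy. destruct (HC x y Hxy) as [i [r [Hr Hin]]].
    destruct (In_nth _ r r0 (In_Lp F i r Hr)) as [p [Hp Hnth]].
    assert (Hsp : s p = r).
    { unfold s. destruct (le_lt_dec p i) as [Hpi|Hpi].
      - rewrite (nth_stable F p i Hpi). exact Hnth.
      - destruct (Lp_prefix F i p ltac:(lia)) as [t Ht]. rewrite Ht, app_nth1 by exact Hp. exact Hnth. }
    exists p. rewrite Hsp. exact Hin.
  - intros M. change (sum_f_R0 (fun k => area (s k)) M <= eps).
    rewrite (sum_eq _ (fun k => area (nth k (Lp F M) r0))).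
    + eapply Rle_trans; [apply sum_nth_le|].
      * intros r Hr. eapply valid_Lp; eauto.
      * rewrite listarea_Lp. apply HS.
    + intros i Hi. unfold s. rewrite (nth_stable F i M Hi). reflexivity.
Qed.



Lemma dist_neg xi eta a b c : dist_approx xi eta (-a) (-b) (-c) = dist_approx xi eta a b c.
Proof.
  unfold dist_approx. rewrite !opp_IZR.
  replace (- IZR a * xi - - IZR b) with (- (IZR a * xi - IZR b)) by ring.
  replace (- IZR a * eta - - IZR c) with (- (IZR a * eta - IZR c)) by ring.
  rewrite !Rabs_Ropp. reflexivity.
Qed.

Lemma dist_scale xi eta (t : nat) a b c :
  dist_approx xi eta (Z.of_nat t * a) (Z.of_nat t * b) (Z.of_nat t * c) = INR t * dist_approx xi eta a b c.
Proof.
  unfold dist_approx. rewrite !mult_IZR, <- !INR_IZR_INZ.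
  replace (INR t * IZR a * xi - INR t * IZR b) with (INR t * (IZR a * xi - IZR b)) by ring.
  replace (INR t * IZR a * eta - INR t * IZR c) with (INR t * (IZR a * eta - IZR c)) by ring.
  rewrite !Rabs_mult, (Rabs_pos_eq (INR t)) by apply pos_INR.
  apply RmaxRmult, pos_INR.
Qed.

Lemma key xi eta l : 1/2 < l -> lambda_set xi eta l -> forall Q : nat, (1 <= Q)%nat ->
  exists (x0 : nat) (x1 x2 : Z), (Q <= x0)%nat /\
     dist_approx xi eta (Z.of_nat x0) x1 x2 <= Rpower (INR x0) (- l).
Proof.
  intros Hl [_ HL] Q HQ. set (q := INR Q).
  assert (Hq : 1 <= q) by (unfold q; apply (le_INR 1); exact HQ).
  destruct (HL (q ^ 6)) as [X [HX [z0 [z1 [z2 [[Hz1 Hz2] Hd]]]]]].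
  assert (Hnorm : exists (y0 : nat) (y1 y2 : Z), INR y0 = Rabs (IZR z0) /\
            dist_approx xi eta (Z.of_nat y0) y1 y2 = dist_approx xi eta z0 z1 z2).
  { destruct (Z_le_gt_dec 0 z0) as [Hs|Hs].
    - exists (Z.to_nat z0), z1, z2. rewrite INR_IZR_INZ, Z2Nat.id by exact Hs.
      rewrite Rabs_pos_eq by (apply IZR_le; exact Hs). split; reflexivity.
    - exists (Z.to_nat (- z0)), (- z1)%Z, (- z2)%Z. rewrite INR_IZR_INZ, Z2Nat.id by lia.
      rewrite Rabs_left by (apply IZR_lt; lia). rewrite opp_IZR. split; [reflexivity|].
      apply dist_neg. }
  destruct Hnorm as [y0 [y1 [y2 [Hy0 Hyd]]]]. rewrite <- Hyd in Hd. rewrite <- Hy0 in Hz1, Hz2.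
  destruct (le_lt_dec Q y0) as [HQy|HQy].
  - exists y0, y1, y2. split; [exact HQy|]. eapply Rle_trans; [exact Hd|].
    apply Rpower_neg_le_base; lra.
  - exists (Q * y0)%nat, (Z.of_nat Q * y1)%Z, (Z.of_nat Q * y2)%Z.
    split; [destruct y0; [simpl in Hz1; lra| nia]|].
    rewrite Nat2Z.inj_mul, dist_scale. fold q. rewrite mult_INR. fold q.
    assert (Hy0Q : INR y0 <= q) by (unfold q; apply le_INR; lia).
    assert (H1 : Rpower X (- l) <= Rpower q (- (6 * l))).
    { replace (- (6 * l)) with (INR 6 * - l) by (simpl; ring).
      rewrite <- Rpower_mult, Rpower_pow by lra. apply Rpower_neg_le_base; [|lra].
      split; [apply pow_lt; lra| exact HX]. }
    assert (H2 : Rpower q (- (2 * l)) <= Rpower (q * INR y0) (- l)).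
    { replace (- (2 * l)) with (INR 2 * - l) by (simpl; ring).
      rewrite <- Rpower_mult, Rpower_pow by lra. apply Rpower_neg_le_base; [|lra].
      split; [apply Rmult_lt_0_compat; lra| simpl; nra]. }
    assert (H3 : q * Rpower q (- (6 * l)) <= Rpower q (- (2 * l))).
    { rewrite <- (Rpower_1 q) at 1 by lra. rewrite <- Rpower_plus.
      apply Rle_Rpower; lra. }
    apply Rle_trans with (q * Rpower X (- l)).
    + apply Rmult_le_compat_l; lra.
    + apply Rle_trans with (q * Rpower q (- (6 * l))); [apply Rmult_le_compat_l; lra|].
      lra.
Qed.

Lemma block (B J x0 : nat) : (2 <= B)%nat -> (B ^ J <= x0)%nat ->
  exists j, (J <= j)%nat /\ (B ^ j <= x0 < B ^ S j)%nat.
Proof.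
  intros HB HJ.
  assert (aux : forall k, (x0 < B ^ (J + k))%nat -> exists j, (J <= j)%nat /\ (B ^ j <= x0 < B ^ S j)%nat).
  { induction k as [|k IH]; intros Hk.
    - rewrite Nat.add_0_r in Hk. lia.
    - destruct (lt_dec x0 (B ^ (J + k))) as [H|H]; [apply IH; exact H|].
      exists (J + k)%nat. split; [lia|]. rewrite <- Nat.add_succ_r. lia. }
  apply (aux x0). eapply Nat.lt_le_trans; [apply (Nat.pow_gt_lin_r B x0); lia|].
  apply Nat.pow_le_mono_r; lia.
Qed.


Definition Bn (n : nat) : nat := (16 ^ (n + 2))%nat.
Definition Wn (n j : nat) : nat := (Bn n ^ S j * 2 ^ j + 1)%nat.
Definition zr (W : nat) : list Z := map (fun k => (Z.of_nat k - Z.of_nat W)%Z) (seq 0 (2 * W + 1)).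
Definition rr (n j : nat) : R := / 4 ^ ((n + 3) * j).
Definition mkrect (r : R) (x0 : nat) (x1 x2 : Z) : rect :=
  mkR ((IZR x1 - r) / INR x0) ((IZR x1 + r) / INR x0) ((IZR x2 - r) / INR x0) ((IZR x2 + r) / INR x0).
Definition blist (n j : nat) : list rect :=
  flat_map (fun x0 => flat_map (fun x1 => map (fun x2 => mkrect (rr n j) x0 x1 x2) (zr (Wn n j)))
                                (zr (Wn n j)))
           (seq (Bn n ^ j) (Bn n ^ S j - Bn n ^ j)).

Lemma Bn_ge n : (2 <= Bn n)%nat.
Proof.
  unfold Bn. assert (H := Nat.pow_le_mono_r 16 1 (n + 2) ltac:(lia) ltac:(lia)). simpl in H. lia.
Qed.

Lemma INR_Bn_pow n j : INR (Bn n ^ j) = 2 ^ (4 * (n + 2) * j).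
Proof.
  unfold Bn. rewrite !pow_INR. replace (INR 16) with (2 ^ 4) by (simpl; ring).
  rewrite <- !pow_mult. f_equal. lia.
Qed.

Lemma rr_pos n j : 0 < rr n j.
Proof. unfold rr. apply Rinv_0_lt_compat, pow_lt. lra. Qed.

Lemma rr_le1 n j : rr n j <= 1.
Proof.
  unfold rr. rewrite <- Rinv_1. apply Rinv_le_contravar; [lra|].
  apply (pow_R1_Rle 4). lra.
Qed.

Lemma Rpower_le_rr n j (x0 : nat) : (Bn n ^ j <= x0)%nat ->
  Rpower (INR x0) (- lseq n) <= rr n j.
Proof.
  intros H. assert (HP : 0 < INR (Bn n ^ j)).
  { apply lt_0_INR. apply Nat.neq_0_lt_0, Nat.pow_nonzero. pose proof (Bn_ge n). lia. }
  eapply Rle_trans.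
  - apply Rpower_neg_le_base; [split; [exact HP| apply le_INR; exact H]|].
    pose proof (pos_INR n). unfold lseq.
    assert (0 < / (2 * INR (n + 2))) by (apply Rinv_0_lt_compat; rewrite plus_INR; simpl; lra). lra.
  - rewrite INR_Bn_pow. rewrite <- Rpower_pow by lra. rewrite Rpower_mult.
    unfold rr. replace 4 with (2 ^ 2) by ring. rewrite <- pow_mult.
    rewrite <- Rpower_pow by lra. rewrite <- Rpower_Ropp.
    right. f_equal. unfold lseq. rewrite !mult_INR, !plus_INR. simpl.
    field. pose proof (pos_INR n). lra.
Qed.

Lemma div_le_l a b c : 0 < c -> a <= b * c -> a / c <= b.
Proof.
  intros Hc H. apply (Rmult_le_reg_r c); [exact Hc|]. unfold Rdiv.
  rewrite Rmult_assoc, Rinv_l, Rmult_1_r by lra. exact H.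
Qed.
Lemma div_le_r a b c : 0 < c -> b * c <= a -> b <= a / c.
Proof.
  intros Hc H. apply (Rmult_le_reg_r c); [exact Hc|]. unfold Rdiv.
  rewrite Rmult_assoc, Rinv_l, Rmult_1_r by lra. exact H.
Qed.

Lemma in_zr (W : nat) (z : Z) : (- Z.of_nat W <= z <= Z.of_nat W)%Z -> In z (zr W).
Proof.
  intros H. unfold zr. apply in_map_iff. exists (Z.to_nat (z + Z.of_nat W)).
  split; [rewrite Z2Nat.id by lia; lia|]. apply in_seq. lia.
Qed.

Lemma coord_bound (x0 : nat) (x1 : Z) (z r : R) (j n : nat) :
  (x0 < Bn n ^ S j)%nat -> Rabs z <= 2 ^ j -> r <= 1 ->
  Rabs (IZR (Z.of_nat x0) * z - IZR x1) <= r -> (- Z.of_nat (Wn n j) <= x1 <= Z.of_nat (Wn n j))%Z.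
Proof.
  intros Hx Hz Hr Hd. rewrite <- INR_IZR_INZ in Hd.
  assert (HW : INR x0 * Rabs z + 1 <= INR (Wn n j)).
  { unfold Wn. rewrite plus_INR, mult_INR, (pow_INR 2 j). replace (INR 2) with 2 by (simpl; ring). simpl (INR 1).
    assert (INR x0 <= INR (Bn n ^ S j)) by (apply le_INR; lia).
    assert (0 <= Rabs z) by apply Rabs_pos. pose proof (pos_INR x0). nra. }
  assert (Hx1 : Rabs (IZR x1) <= INR (Wn n j)).
  { replace (IZR x1) with (INR x0 * z - (INR x0 * z - IZR x1)) by ring.
    eapply Rle_trans; [apply Rabs_triang|]. rewrite Rabs_Ropp, Rabs_mult, (Rabs_pos_eq (INR x0)) by apply pos_INR.
    lra. }
  rewrite INR_IZR_INZ in Hx1. apply Rabs_le_between' in Hx1 || idtac.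
  destruct (Rabs_def2b _ _ Hx1) as [A1 A2] || idtac.
  split.
  - apply le_IZR. rewrite opp_IZR. pose proof (Rle_abs (- IZR x1)). rewrite Rabs_Ropp in H. lra.
  - apply le_IZR. pose proof (Rle_abs (IZR x1)). lra.
Qed.

Lemma abs_bounds v r : Rabs v <= r -> - r <= v <= r.
Proof. intros H. pose proof (Rle_abs v). pose proof (Rle_abs (- v)). rewrite Rabs_Ropp in H1. lra. Qed.

Lemma in_blist n j (x0 : nat) x1 x2 xi eta : (Bn n ^ j <= x0 < Bn n ^ S j)%nat ->
  Rabs xi <= 2 ^ j -> Rabs eta <= 2 ^ j ->
  dist_approx xi eta (Z.of_nat x0) x1 x2 <= Rpower (INR x0) (- lseq n) ->
  exists r, In r (blist n j) /\ inR r xi eta.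
Proof.
  intros Hx Hxi Heta Hd.
  assert (Hd' : dist_approx xi eta (Z.of_nat x0) x1 x2 <= rr n j)
    by (eapply Rle_trans; [exact Hd| apply Rpower_le_rr; lia]).
  unfold dist_approx in Hd'.
  assert (D1 := Rle_trans _ _ _ (Rmax_l _ _) Hd').
  assert (D2 := Rle_trans _ _ _ (Rmax_r _ _) Hd').
  assert (Hr1 := rr_le1 n j).
  exists (mkrect (rr n j) x0 x1 x2). split.
  - unfold blist. apply in_flat_map. exists x0. split; [apply in_seq; lia|].
    apply in_flat_map. exists x1. split.
    + apply in_zr. eapply coord_bound; [|exact Hxi| exact Hr1| exact D1]. lia.
    + apply in_map_iff. exists x2. split; [reflexivity|]. apply in_zr.
      eapply coord_bound; [|exact Heta| exact Hr1| exact D2]. lia.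
  - rewrite <- INR_IZR_INZ in D1, D2. apply abs_bounds in D1. apply abs_bounds in D2.
    assert (Hx0 : 0 < INR x0).
    { apply lt_0_INR. assert (Bn n ^ j <> 0)%nat by (apply Nat.pow_nonzero; pose proof (Bn_ge n); lia). lia. }
    unfold inR, mkrect; simpl. repeat split.
    + apply div_le_l; lra.
    + apply div_le_r; lra.
    + apply div_le_l; lra.
    + apply div_le_r; lra.
Qed.

Lemma valid_blist n j r : In r (blist n j) -> valid r.
Proof.
  unfold blist. intros H. apply in_flat_map in H. destruct H as [x0 [Hx0 H]].
  apply in_flat_map in H. destruct H as [x1 [_ H]]. apply in_map_iff in H.
  destruct H as [x2 [<- _]]. apply in_seq in Hx0.
  assert (Hp : 0 < INR x0).
  { apply lt_0_INR. assert (Bn n ^ j <> 0)%nat by (apply Nat.pow_nonzero; pose proof (Bn_ge n); lia). lia. }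
  assert (Hi : 0 < / INR x0) by (apply Rinv_0_lt_compat; exact Hp).
  pose proof (rr_pos n j).
  unfold valid, mkrect; simpl. unfold Rdiv. split; apply Rmult_le_compat_r; lra.
Qed.

Lemma listarea_map_le {A} (g : A -> rect) l c : (forall x, In x l -> area (g x) <= c) ->
  listarea (map g l) <= INR (length l) * c.
Proof.
  induction l as [|a l IH]; intros H; cbn [map flat_map listarea length]; [simpl; lra|].
  rewrite S_INR. assert (area (g a) <= c) by (apply H; simpl; auto).
  assert (listarea (map g l) <= INR (length l) * c) by (apply IH; intros; apply H; simpl; auto). lra.
Qed.


Lemma listarea_fm_le {A} (f : A -> list rect) l c : (forall x, In x l -> listarea (f x) <= c) ->
  listarea (flat_map f l) <= INR (length l) * c.
Proof.
  induction l as [|a l IH]; intros H; cbn [map flat_map listarea length]; [simpl; lra|].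
  rewrite listarea_app, S_INR. assert (listarea (f a) <= c) by (apply H; simpl; auto).
  assert (listarea (flat_map f l) <= INR (length l) * c) by (apply IH; intros; apply H; simpl; auto). lra.
Qed.

Lemma area_blist n j : listarea (blist n j) <= 100 * INR (Bn n) ^ 3 / 4 ^ j.
Proof.
  set (b := INR (Bn n)). set (P := INR (Bn n ^ j)). set (f := 2 ^ j). set (r := rr n j).
  set (w := INR (Wn n j)).
  assert (Hb : 2 <= b) by (unfold b; apply (le_INR 2), Bn_ge).
  assert (HP : 1 <= P).
  { unfold P. apply (le_INR 1). assert (Bn n ^ j <> 0)%nat by (apply Nat.pow_nonzero; pose proof (Bn_ge n); lia). lia. }
  assert (Hf : 1 <= f) by (unfold f; apply pow_R1_Rle; lra).
  assert (Hr : 0 < r) by apply rr_pos.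
  assert (HbP : INR (Bn n ^ S j) = b * P) by (unfold b, P; rewrite !pow_INR; simpl; ring).
  assert (Hw : w = b * P * f + 1).
  { unfold w, Wn. rewrite plus_INR, mult_INR, HbP, (pow_INR 2 j). replace (INR 2) with 2 by (simpl; ring). unfold f. simpl. ring. }
  assert (Hrr : r * r * P * f ^ 4 = 1).
  { unfold r, P, f, rr. rewrite INR_Bn_pow, <- pow_mult.
    replace (4 ^ ((n + 3) * j)) with (2 ^ (2 * ((n + 3) * j))) by (rewrite pow_mult; f_equal; ring).
    rewrite Rmult_assoc, <- pow_add.
    replace (4 * (n + 2) * j + j * 4)%nat with (2 * ((n + 3) * j) + 2 * ((n + 3) * j))%nat by lia.
    rewrite pow_add. field. apply pow_nonzero; lra. }
  assert (H4 : 4 ^ j = f * f) by (unfold f; replace 4 with (2 * 2) by ring; apply Rpow_mult_distr).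
  unfold blist.
  eapply Rle_trans.
  { apply (listarea_fm_le _ _ (INR (2 * Wn n j + 1) * (INR (2 * Wn n j + 1) * (4 * r * r / (P * P))))).
    intros x0 Hx0. apply in_seq in Hx0.
    assert (HPx : P <= INR x0) by (unfold P; apply le_INR; lia).
    assert (Lz : INR (length (zr (Wn n j))) = INR (2 * Wn n j + 1))
      by (unfold zr; rewrite length_map, length_seq; reflexivity).
    rewrite <- !Lz.
    apply listarea_fm_le. intros x1 _.
    apply listarea_map_le. intros x2 _. unfold area, mkrect; simpl. fold r.
    replace (((IZR x1 + r) / INR x0 - (IZR x1 - r) / INR x0) * ((IZR x2 + r) / INR x0 - (IZR x2 - r) / INR x0))
      with (4 * r * r / (INR x0 * INR x0)) by (field; lra).
    unfold Rdiv. apply Rmult_le_compat_l; [nra|]. apply Rinv_le_contravar; nra. }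
  rewrite length_seq.
  assert (Hlen : INR (Bn n ^ S j - Bn n ^ j) <= b * P).
  { rewrite <- HbP. apply le_INR. lia. }
  replace (INR (2 * Wn n j + 1)) with (2 * w + 1) by (unfold w; rewrite plus_INR, mult_INR; simpl; ring).
  rewrite H4.
  assert (HbP1 : 1 <= b * P) by nra.
  assert (HbPf : 1 <= b * P * f) by nra.
  assert (Hw5 : 2 * w + 1 <= 5 * (b * P * f)) by (rewrite Hw; nra).
  assert (Hw0 : 0 <= 2 * w + 1) by (rewrite Hw; nra).
  assert (Hq : 0 <= 4 * r * r / (P * P)) by (apply Rmult_le_pos; [nra| apply Rlt_le, Rinv_0_lt_compat; nra]).
  apply Rle_trans with (b * P * (5 * (b * P * f) * (5 * (b * P * f) * (4 * r * r / (P * P))))).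
  { apply Rmult_le_compat; try lra; try apply pos_INR; try (apply Rmult_le_pos; lra).
    - apply Rmult_le_pos; [lra| apply Rmult_le_pos; lra].
    - apply Rmult_le_compat; try lra; [apply Rmult_le_pos; lra|].
      apply Rmult_le_compat_r; lra. }
  right. field_simplify_eq; [|split; lra].
  transitivity (100 * b ^ 3 * (r * r * P * f ^ 4)); [ring|]. rewrite Hrr. ring.
Qed.

Lemma frac_le a b c d : 0 < c -> 0 < d -> a * d <= b * c -> a / c <= b / d.
Proof.
  intros Hc Hd H. apply (Rmult_le_reg_r (c * d)); [nra|].
  replace (a / c * (c * d)) with (a * d) by (field; lra).
  replace (b / d * (c * d)) with (b * c) by (field; lra). exact H.
Qed.

Lemma INR_le_pow2 k : INR k <= 2 ^ k.
Proof.
  induction k; [simpl; lra|]. rewrite S_INR. simpl (2 ^ S k). pose proof (pow_R1_Rle 2 k ltac:(lra)). lra.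
Qed.

Lemma geo4 M : sum_f_R0 (fun i => / 4 ^ i) M = 4/3 - / (3 * 4 ^ M).
Proof.
  induction M; simpl; [field|]. rewrite IHM. field. apply pow_nonzero. lra.
Qed.

Lemma fm_seq_le (f : nat -> list rect) c : 0 <= c ->
  (forall n, listarea (f n) <= c * / 2 ^ S n) ->
  forall k s, listarea (flat_map f (seq s k)) <= c * / 2 ^ s.
Proof.
  intros Hc Hf. induction k as [|k IH]; intros s; simpl.
  - apply Rmult_le_pos; [lra| apply Rlt_le, Rinv_0_lt_compat, pow_lt; lra].
  - rewrite listarea_app. specialize (Hf s). specialize (IH (S s)). simpl in Hf, IH.
    assert (c * / (2 * 2 ^ s) = c * / 2 ^ s / 2) by (field; apply pow_nonzero; lra). lra.
Qed.

Lemma nat_above (x : R) : exists k : nat, x <= INR k.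
Proof.
  destruct (archimed (Rabs x)) as [H1 _].
  assert (Hu : (0 <= up (Rabs x))%Z) by (apply le_IZR; pose proof (Rabs_pos x); lra).
  exists (Z.to_nat (up (Rabs x))). rewrite INR_IZR_INZ, Z2Nat.id by exact Hu.
  pose proof (Rle_abs x). lra.
Qed.

Lemma null_N : null2 (fun xi eta => exists n, lambda_set xi eta (lseq n)).
Proof.
  apply null_from_lists. intros eps Heps. set (e := eps / 2).
  assert (He : 0 < e) by (unfold e; lra).
  assert (HJ : forall n, exists J : nat, 100 * INR (Bn n) ^ 3 / 4 ^ J <= e / 2 ^ S n).
  { intros n. destruct (nat_above (100 * INR (Bn n) ^ 3 * 2 ^ S n / e)) as [k Hk].
    exists k. apply frac_le; [apply pow_lt; lra| apply pow_lt; lra|].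
    assert (H1 : INR k <= 4 ^ k).
    { eapply Rle_trans; [apply INR_le_pow2|]. apply pow_incr. lra. }
    assert (H2 : 100 * INR (Bn n) ^ 3 * 2 ^ S n / e <= 4 ^ k) by lra.
    apply (Rmult_le_compat_r e) in H2; [|lra].
    replace (100 * INR (Bn n) ^ 3 * 2 ^ S n / e * e) with (100 * INR (Bn n) ^ 3 * 2 ^ S n) in H2
      by (field; lra). lra. }
  set (Jf := fun n => proj1_sig (constructive_indefinite_description _ (HJ n))).
  assert (HJf : forall n, 100 * INR (Bn n) ^ 3 / 4 ^ Jf n <= e / 2 ^ S n)
    by (intros n; unfold Jf; exact (proj2_sig (constructive_indefinite_description _ (HJ n)))).
  exists (fun i => flat_map (fun n => blist n (Jf n + i)) (seq 0 (S i))).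
  split; [|split].
  - intros i r Hr. apply in_flat_map in Hr. destruct Hr as [n [_ Hr]]. eapply valid_blist; exact Hr.
  - intros xi eta [n Hn].
    destruct (nat_above (Rmax (Rabs xi) (Rabs eta))) as [k Hk].
    set (J' := (k + Jf n + n)%nat).
    assert (HB := Bn_ge n).
    assert (HQ : (1 <= Bn n ^ J')%nat) by (assert (Bn n ^ J' <> 0)%nat by (apply Nat.pow_nonzero; lia); lia).
    destruct (key xi eta (lseq n) (lseq_gt n) Hn (Bn n ^ J') HQ) as [x0 [x1 [x2 [Hx0 Hd]]]].
    destruct (block (Bn n) J' x0 HB Hx0) as [j [Hj Hjx]].
    assert (H2j : Rmax (Rabs xi) (Rabs eta) <= 2 ^ j).
    { eapply Rle_trans; [exact Hk|]. eapply Rle_trans; [apply le_INR; apply (Nat.le_trans _ J'); [unfold J'; lia| exact Hj]|].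
      apply INR_le_pow2. }
    destruct (in_blist n j x0 x1 x2 xi eta Hjx
                (Rle_trans _ _ _ (Rmax_l _ _) H2j) (Rle_trans _ _ _ (Rmax_r _ _) H2j) Hd) as [r [Hr Hin]].
    exists (j - Jf n)%nat, r. split; [|exact Hin].
    apply in_flat_map. exists n. split; [apply in_seq; unfold J' in Hj; lia|].
    replace (Jf n + (j - Jf n))%nat with j by (unfold J' in Hj; lia). exact Hr.
  - intros M. apply Rle_trans with (sum_f_R0 (fun i => e * / 4 ^ i) M).
    + apply sum_Rle. intros i _.
      replace (e * / 4 ^ i) with ((e * / 4 ^ i) * / 2 ^ 0) by (simpl; field; apply pow_nonzero; lra).
      apply fm_seq_le.
      * apply Rmult_le_pos; [lra| apply Rlt_le, Rinv_0_lt_compat, pow_lt; lra].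
      * intros m. eapply Rle_trans; [apply area_blist|]. rewrite pow_add.
        specialize (HJf m).
        replace (100 * INR (Bn m) ^ 3 / (4 ^ Jf m * 4 ^ i)) with ((100 * INR (Bn m) ^ 3 / 4 ^ Jf m) * / 4 ^ i)
          by (field; split; apply pow_nonzero; lra).
        replace (e * / 4 ^ i * / 2 ^ S m) with ((e / 2 ^ S m) * / 4 ^ i)
          by (field; split; apply pow_nonzero; lra).
        apply Rmult_le_compat_r; [apply Rlt_le, Rinv_0_lt_compat, pow_lt; lra| exact HJf].
    + rewrite (sum_eq _ (fun i => / 4 ^ i * e)) by (intros; ring).
      rewrite <- scal_sum, geo4.
      assert (0 < / (3 * 4 ^ M)) by (apply Rinv_0_lt_compat; pose proof (pow_lt 4 M); lra).
      unfold e. nra.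
Qed.
Lemma exists_lseq_le l : 1/2 < l -> exists n, lseq n <= l.
Proof.
  intros Hl. set (x := / (2 * (l - 1/2))).
  assert (Hx : 0 < x) by (unfold x; apply Rinv_0_lt_compat; lra).
  destruct (archimed x) as [H1 _].
  assert (Hu : (0 <= up x)%Z) by (apply le_IZR; lra).
  exists (Z.to_nat (up x)). unfold lseq.
  assert (HI : INR (Z.to_nat (up x) + 2) = IZR (up x) + 2).
  { rewrite plus_INR, INR_IZR_INZ, Z2Nat.id by exact Hu. simpl. ring. }
  rewrite HI.
  assert (/ (2 * (IZR (up x) + 2)) <= l - 1/2); [|lra].
  replace (l - 1/2) with (/ (2 * x)).
  2:{ unfold x. field. lra. }
  apply Rinv_le_contravar; lra.
Qed.

Theorem theorem1 :
  exists N : R -> R -> Prop, null2 N /\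
    forall xi eta : R, ~ N xi eta -> lambda_min_is xi eta (Finite (1/2)).
Proof.
  exists (fun xi eta => exists n, lambda_set xi eta (lseq n)). split; [exact null_N|].
  intros xi eta HN.
  assert (Hup : forall l, lambda_set xi eta l -> l <= 1/2).
  { intros l Hl. destruct (Rle_or_lt l (1/2)) as [H|H]; [exact H|].
    exfalso. destruct (exists_lseq_le l H) as [n Hn]. apply HN. exists n.
    eapply lambda_mono; [|exact Hl]. pose proof (lseq_gt n). lra. }
  assert (Hlam : lambda xi eta = Finite (1/2)).
  { apply sup0_eq; [lra|exact Hup|]. intros l Hl.
    apply (hat_in_lambda _ _ (1/4)). apply dirichlet_hat; lra. }
  assert (Hhat : forall mu, 0 < mu < 1/2 -> hat_lambda_mu xi eta mu = Finite (1/2)).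
  { intros mu Hmu. apply sup0_eq; [lra| |].
    - intros l Hl. apply Hup. eapply hat_in_lambda; exact Hl.
    - intros l Hl. apply dirichlet_hat; lra. }
  split.
  - intros w [mu [Hmu [Hlt ->]]]. rewrite Hlam in Hlt. simpl in Hlt.
    rewrite Hhat by lra. simpl. lra.
  - intros u Hu. apply (Hu (Finite (1/2))). exists (1/4). rewrite Hlam. simpl.
    split; [lra|]. split; [lra|]. symmetry. apply Hhat. lra.
Qed.
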